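(* Let $N\in\mathbb Z$, $\gamma\in\mathbb Q$. For every $k\in\mathbb Q$ and every integer $i\le N$, $$\varphi_{N,\gamma}\Big(\mathrm{Res}_x\big((1+x)^kx^i\textstyle\sum_{j\le N}z^jx^{-j-1}\big)\Big)=(-1)^{i+1}\mathrm{Res}_x\big((1+x)^{\gamma-k-i}x^i\textstyle\sum_{j\le N}z^jx^{-j-1}\big).$$ In particular $\varphi_{N,\gamma}^2=\mathrm{id}$, and $\varphi_{N,\gamma}(O(N,Q,q;z))=O(N,\gamma-Q-q,q;z)$ for all $Q\in\mathbb Q$, $q\in\mathbb Z$.
   Context: $\mathrm{Res}_x$ denotes the coefficient of $x^{-1}$ and $(1+x)^c$ ($c\in\mathbb Q$) denotes the binomial series $\sum_{k\ge0}\binom ckx^k$; thus $\mathrm{Res}_x\big((1+x)^kx^i\sum_{j\le N}z^jx^{-j-1}\big)=\sum_{l=0}^{N-i}\binom kl z^{i+l}$. The linear map $\varphi_{N,\gamma}:\mathbb C[z,z^{-1}]\to\mathbb C[z,z^{-1}]$ is defined on monomials by $\varphi_{N,\gamma}(z^i)=(-1)^{i+1}\mathrm{Res}_x\big((1+x)^{\gamma-i}x^i\sum_{j\le N}z^jx^{-j-1}\big)$ for $i\le N$ and $\varphi_{N,\gamma}(z^i)=z^i$ for $i\ge N+1$. For $N,q\in\mathbb Z$ and $Q\in\mathbb Q$, $O(N,Q,q;z)$ is the subspace of $\mathbb C[z,z^{-1}]$ spanned by $z^i$ ($i\ge N+1$) together with $\sum_{i=0}^{N-q-j}\binom Qi z^{i+q+j}$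 for $j=0,-1,-2,\dots$. *)

(* Defs.v *)
From HB Require Import structures.
From mathcomp Require Import all_boot all_order all_algebra.
Set Implicit Arguments. Unset Strict Implicit. Unset Printing Implicit Defensive.
Import Order.TTheory GRing.Theory Num.Theory.
Local Open Scope ring_scope.

Definition binq (c : rat) (l : nat) : rat :=
  (\prod_(t < l) (c - t%:R)) / (l`!)%:R.

(* Laurent polynomials in z over R, given as finite formal sums
   sum_{(i,c) in s} c z^i.  Two formal sums denote the same Laurent
   polynomial iff their coefficient functions [lcoef] agree. *)
Definition lpoly (R : nzRingType) := seq (int * R).

Definition lcoef (R : nzRingType) (s : lpoly R) (m : int) : R :=
  \sum_(t <- s | t.1 == m) t.2.

Definition lmono (R : nzRingType) (i : int) : lpoly R := [:: (i, 1)].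

Definition lscale (R : nzRingType) (c : R) (s : lpoly R) : lpoly R :=
  [seq (t.1, c * t.2) | t <- s].

(* ressum c a M = sum_{l=0}^{M-a} binom(c,l) z^{a+l}  (empty if M < a).
   In particular Res_x((1+x)^k x^i sum_{j<=N} z^j x^{-j-1}) = ressum k i N. *)
Definition ressum (R : numFieldType) (c : rat) (a M : int) : lpoly R :=
  [seq (a + (l%:Z), ratr (binq c l)) |
     l <- iota 0 (if a <= M then (absz (M - a)).+1 else 0)].

Definition phi_mono (R : numFieldType) (N : int) (g : rat) (i : int) : lpoly R :=
  if i <= N then lscale ((-1) ^ (i + 1)) (ressum R (g - i%:~R) i N)
  else lmono R i.

Definition phi (R : numFieldType) (N : int) (g : rat) (s : lpoly R) : lpoly R :=
  flatten [seq lscale t.2 (phi_mono R N g t.1) | t <- s].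

(* s lies in O(N,Q,q;z): s is (as a Laurent polynomial) a finite linear
   combination of z^i (i >= N+1) and of sum_{i=0}^{N-q-j} binom(Q,i) z^{i+q+j}
   (j <= 0). *)
Definition inO (R : numFieldType) (N : int) (Q : rat) (q : int) (s : lpoly R) : Prop :=
  exists (a b : seq (int * R)),
    all (fun t => N < t.1) a /\ all (fun t => t.1 <= 0) b /\
    lcoef s =1 lcoef (a ++ flatten [seq lscale t.2 (ressum R Q (q + t.1) N) | t <- b]).
Arguments ressum R c a M : clear implicits.
Arguments phi_mono R N g i : clear implicits.
Arguments phi R N g s : clear implicits.
Arguments inO R N Q q s : clear implicits.

(* Main.v *)
Require Import Defs.
From HB Require Import structures.
From mathcomp Require Import all_boot all_order all_algebra.
From mathcomp Require Import zify ring lra.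
Import Order.TTheory GRing.Theory Num.Theory.
Local Open Scope ring_scope.


Lemma binq0 c : binq c 0 = 1.
Proof. by rewrite /binq big_ord0 fact0 divr1. Qed.

Lemma binqS c l : binq c l.+1 = c * binq (c - 1) l / l.+1%:R.
Proof.
rewrite /binq big_ord_recl /= subr0 factS natrM.
under eq_bigr => t _ do rewrite /bump /= add1n -addn1 natrD opprD addrA addrAC.
have h1 : (l`!)%:R != 0 :> rat by rewrite pnatr_eq0 -lt0n fact_gt0.
have h2 : (l.+1)%:R != 0 :> rat by rewrite pnatr_eq0.
by field; rewrite nat1r h1 h2.
Qed.

Lemma binqS' c l : l.+1%:R * binq c l.+1 = c * binq (c - 1) l.
Proof.
have h : (l.+1)%:R != 0 :> rat by rewrite pnatr_eq0.
by rewrite binqS; field; rewrite nat1r.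
Qed.

Lemma vand n : forall x y,
  binq (x + y) n = \sum_(l < n.+1) binq x l * binq y (n - l).
Proof.
elim: n => [|n IH] x y.
  by rewrite big_ord1 !binq0 mulr1.
have hn : (n.+1)%:R != 0 :> rat by rewrite pnatr_eq0.
apply: (mulfI hn); rewrite binqS'.
have e1 : binq (x + y - 1) n = \sum_(l < n.+1) binq (x - 1) l * binq y (n - l).
  by rewrite -IH; congr binq; ring.
have e2 : binq (x + y - 1) n = \sum_(l < n.+1) binq x l * binq (y - 1) (n - l).
  by rewrite -IH; congr binq; ring.
rewrite mulrDl {1}e1 e2 [RHS]mulr_sumr.
rewrite [RHS](eq_bigr (fun l : 'I_n.+2 => l%:R * (binq x l * binq y (n.+1 - l))
          + (n.+1 - l)%:R * (binq x l * binq y (n.+1 - l)))); last first.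
  move=> l _; rewrite -mulrDl -natrD subnKC //.
  by have := ltn_ord l.
rewrite big_split /= [X in _ = X + _]big_ord_recl /= mul0r add0r.
rewrite [X in _ = _ + X]big_ord_recr /= subnn mul0r addr0.
rewrite !mulr_sumr; congr (_ + _); apply: eq_bigr => i _.
  by rewrite /bump /= add1n subSS [RHS]mulrA binqS' mulrA.
rewrite subSn; last by have := ltn_ord i.
by rewrite [RHS]mulrCA binqS' mulrCA.
Qed.

Section L.
Variable R : numFieldType.
Implicit Types (s : lpoly R) (m : int).

Lemma lcoef_nil m : lcoef ([::] : lpoly R) m = 0.
Proof. by rewrite /lcoef big_nil. Qed.

Lemma lcoef_cat s1 s2 m : lcoef (s1 ++ s2) m = lcoef s1 m + lcoef s2 m.
Proof. by rewrite /lcoef big_cat. Qed.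

Lemma lcoef_cons t s m :
  lcoef (t :: s) m = (if t.1 == m then t.2 else 0) + lcoef s m.
Proof. by rewrite /lcoef big_cons; case: ifP; rewrite ?add0r. Qed.

Lemma lcoef_lscale c s m : lcoef (lscale c s) m = c * lcoef s m.
Proof. by rewrite /lcoef /lscale big_map mulr_sumr. Qed.

Lemma lcoef_mono i m : lcoef (lmono R i) m = (i == m)%:R.
Proof. by rewrite /lcoef /lmono big_cons big_nil addr0; case: eqP. Qed.

Lemma lcoef_flatten (T : Type) (F : T -> lpoly R) b m :
  lcoef (flatten [seq F t | t <- b]) m = \sum_(t <- b) lcoef (F t) m.
Proof. by rewrite /lcoef big_flatten big_map. Qed.

Definition Ef (f : int -> R) s := \sum_(t <- s) t.2 * f t.1.

Lemma Ef_cat f s1 s2 : Ef f (s1 ++ s2) = Ef f s1 + Ef f s2.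
Proof. by rewrite /Ef big_cat. Qed.

Lemma Ef_lscale f c s : Ef f (lscale c s) = c * Ef f s.
Proof. by rewrite /Ef /lscale big_map mulr_sumr; apply: eq_bigr => t _; rewrite mulrA. Qed.

Lemma Ef_flatten (T : Type) f (F : T -> lpoly R) b :
  Ef f (flatten [seq F t | t <- b]) = \sum_(t <- b) Ef f (F t).
Proof. by rewrite /Ef big_flatten big_map. Qed.

Lemma Ef_nil f : Ef f [::] = 0.
Proof. by rewrite /Ef big_nil. Qed.

Lemma lcoef_phi N g s m :
  lcoef (phi R N g s) m = Ef (fun j => lcoef (phi_mono R N g j) m) s.
Proof.
rewrite /phi lcoef_flatten /Ef; apply: eq_bigr => t _.
by rewrite lcoef_lscale.
Qed.

Lemma Ef_lcoef f s (r : seq int) : uniq r -> {subset [seq t.1 | t <- s] <= r} ->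
  Ef f s = \sum_(i <- r) lcoef s i * f i.
Proof.
move=> ur; elim: s => [|t s IH] sub.
  by rewrite /Ef big_nil big1 // => i _; rewrite /lcoef big_nil mul0r.
have t1r : t.1 \in r by apply: sub; rewrite inE eqxx.
have sub' : {subset [seq t.1 | t <- s] <= r}.
  by move=> x hx; apply: sub; rewrite inE hx orbT.
rewrite /Ef big_cons -/(Ef f s) (IH sub').
under [RHS]eq_bigr => i _ do rewrite lcoef_cons mulrDl.
rewrite big_split /=; congr (_ + _).
rewrite (big_rem t.1) //= eqxx big1_seq ?addr0 //.
move=> i /andP [_ hi]; case: eqP => [e|]; last by rewrite mul0r.
rewrite rem_filter // mem_filter /= in hi.
by move: hi; rewrite e eqxx.
Qed.

Lemma Ef_ext f s s' : lcoef s =1 lcoef s' -> Ef f s = Ef f s'.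
Proof.
move=> e.
set r := undup [seq t.1 | t <- s ++ s'].
have ur : uniq r := undup_uniq _.
rewrite (@Ef_lcoef f s r) //; last first.
  by move=> x hx; rewrite mem_undup map_cat mem_cat hx.
rewrite (@Ef_lcoef f s' r) //; last first.
  by move=> x hx; rewrite mem_undup map_cat mem_cat hx orbT.
by elim/big_rec2: _ => // i y1 y2 _ ->; rewrite e.
Qed.

Lemma Ef_delta s m : Ef (fun j => (j == m)%:R) s = lcoef s m.
Proof.
rewrite /Ef /lcoef [RHS]big_mkcond /=; apply: eq_bigr => t _.
by case: (t.1 == m); rewrite ?mulr1 ?mulr0.
Qed.

Lemma lcoef_ressum c a M p :
  lcoef (ressum R c a M) p =
  if (a <= p) && (p <= M) then ratr (binq c (absz (p - a))) else 0.
Proof.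
have [h|h] := boolP ((a <= p) && (p <= M)).
  rewrite /lcoef /ressum big_map /=.
  have hM : a <= M by lia.
  rewrite hM (big_rem (absz (p - a))); last by rewrite mem_iota; lia.
  have -> : (a + (absz (p - a))%:Z == p) = true by apply/eqP; lia.
  rewrite big1_seq; first by rewrite /= addr0.
  move=> l /andP [hl hl'].
  rewrite rem_filter ?iota_uniq // mem_filter /= in hl'.
  move: hl'=> /andP [hne _]; exfalso; move: hne => /eqP; apply.
  move/eqP: hl; lia.
rewrite /lcoef /ressum big_map /= big1_seq // => l /andP [hl hl'].
exfalso; move: hl'; case: ifP => hM; rewrite mem_iota // => /andP [_ hl2].
move/eqP: hl; move: hl2 h hM; lia.
Qed.

End L.

Lemma binq0n n : binq 0 n = (n == 0)%N%:R.
Proof. by case: n => [|n]; rewrite ?binq0 // binqS !mul0r. Qed.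

Lemma binq_nat m l : binq m%:R l = 'C(m, l)%:R.
Proof.
elim: m l => [|m IH] [|l]; rewrite ?binq0 ?bin0 //.
  by rewrite binqS !mul0r bin0n.
have hn : (l.+1)%:R != 0 :> rat by rewrite pnatr_eq0.
apply: (mulfI hn); rewrite binqS' -natrM -mul_bin_diag natrM /=.
by rewrite -IH; congr (_ * binq _ _); rewrite -natr1 addrK.
Qed.

Lemma binq_neg c r : binq c r = (-1) ^+ r * binq (r%:R - c - 1) r.
Proof.
rewrite /binq mulrA; congr (_ / _).
rewrite [X in _ = _ * X](reindex_inj rev_ord_inj) /=.
rewrite [X in _ = _ * X](eq_bigr (fun t : 'I_r => (-1) * (c - t%:R))); last first.
  move=> t _; have ht := ltn_ord t.
  rewrite natrB // -natr1; ring.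
rewrite big_split /= prodr_const card_ord mulrA -exprMn mulrNN mulr1 expr1n mul1r.
by [].
Qed.

Lemma I1 k a p : \sum_(l < p.+1) (-1) ^+ l * binq k l * binq (a - l%:R) (p - l)
  = binq (a - k) p.
Proof.
rewrite binq_neg.
have -> : p%:R - (a - k) - 1 = k + (p%:R - a - 1) by ring.
rewrite vand mulr_sumr; apply: eq_bigr => l _.
have hl : (l <= p)%N by have := ltn_ord l.
rewrite (binq_neg (a - _)) natrB //.
have -> : (-1) ^+ p = (-1) ^+ l * (-1) ^+ (p - l) :> rat by rewrite -exprD subnKC.
have -> : p%:R - l%:R - (a - l%:R) - 1 = p%:R - a - 1 by ring.
ring.
Qed.

Lemma sign2 (R : numFieldType) (z : int) : (-1 : R) ^ z * (-1) ^ z = 1.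
Proof. by rewrite -expfzMl mulrNN mulr1 exp1rz. Qed.

Lemma part1 (R : numFieldType) N g k i m :
  lcoef (phi R N g (ressum R k i N)) m
  = (-1) ^ (i + 1) * lcoef (ressum R (g - k - i%:~R) i N) m.
Proof.
rewrite lcoef_phi lcoef_ressum.
case hiN: (i <= N); last first.
  rewrite /ressum hiN /= Ef_nil ifF ?mulr0 //; apply/negbTE; lia.
rewrite /Ef /ressum hiN big_map.
set K := (absz (N - i)).+1.
rewrite big_seq (eq_bigr (fun l => ratr (binq k l) * ((-1) ^ (i + l%:Z + 1)%R *
   (if (i + l%:Z <= m) && (m <= N) then
      ratr (binq (g - (i + l%:Z)%:~R) (absz (m - (i + l%:Z))%R)) else 0)))); last first.
  move=> l; rewrite mem_iota => hl; rewrite /phi_mono ifT ?lcoef_lscale ?lcoef_ressum //.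
  move: hl; rewrite /K /=; lia.
rewrite -big_seq.
have [h|h] := boolP ((i <= m) && (m <= N)); last first.
  rewrite mulr0 big1_seq // => l _; rewrite ifF ?mulr0 //; apply/negbTE; lia.
set p := absz (m - i).
have hpK : (p.+1 <= K)%N by rewrite /K /p; lia.
have -> : iota 0 K = index_iota 0 K by rewrite /index_iota subn0.
rewrite (big_cat_nat _ (n := p.+1)) //=.
rewrite [X in _ + X]big_nat_cond [X in _ + X]big1 ?addr0; last first.
  move=> l /andP [/andP [hl1 hl2] _]; rewrite ifF ?mulr0 //; apply/negbTE.
  move: hl1; rewrite /p; lia.
rewrite big_mkord.
have -> : g - k - i%:~R = g - i%:~R - k by ring.
rewrite -I1 rmorph_sum mulr_sumr; apply: eq_bigr => l _.
have hl : (l <= p)%N by have := ltn_ord l.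
rewrite ifT; last by move: hl; rewrite /p; lia.
have -> : absz (m - (i + (l : nat)%:Z))%R = (p - l)%N by move: hl; rewrite /p; lia.
have -> : g - (i + (l : nat)%:Z)%:~R = g - i%:~R - (l : nat)%:R.
  by rewrite intrD; rewrite [X in _ - (_ + X)]/intmul /=; ring.
have -> : (-1 : R) ^ (i + (l : nat)%:Z + 1)%R = (-1) ^ (i + 1)%R * (-1) ^+ l.
  by rewrite addrAC expfzDr // oppr_eq0 oner_eq0.
rewrite !rmorphM rmorph_sign; ring.
Qed.

Lemma phi_phi_mono (R : numFieldType) N g j m :
  lcoef (phi R N g (phi_mono R N g j)) m = (j == m)%:R.
Proof.
rewrite /phi_mono; case: ifP => hj.
  rewrite lcoef_phi Ef_lscale -lcoef_phi part1.
  have -> : g - (g - j%:~R) - j%:~R = 0 by ring.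
  rewrite lcoef_ressum mulrA sign2 mul1r.
  have [h|h] := boolP ((j <= m) && (m <= N)).
    rewrite binq0n.
    have [e|e] := eqVneq j m.
      by rewrite e subrr /= rmorph1.
    have -> : (absz (m - j) == 0)%N = false by apply/negbTE; move: e h; lia.
    by rewrite rmorph0.
  have -> : (j == m) = false by apply/negbTE; move: h hj; lia.
  by [].
rewrite lcoef_phi /Ef /lmono big_cons big_nil addr0 /= mul1r.
by rewrite /phi_mono hj lcoef_mono.
Qed.

Lemma part2 (R : numFieldType) N g (s : lpoly R) :
  lcoef (phi R N g (phi R N g s)) =1 lcoef s.
Proof.
move=> m; rewrite lcoef_phi {1}/phi Ef_flatten -Ef_delta [RHS]/Ef.
apply: eq_bigr => t _; rewrite Ef_lscale -lcoef_phi phi_phi_mono.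
by [].
Qed.

Lemma sum_trunc (R : nmodType) (F : nat -> R) a b : (a <= b)%N ->
  (forall l, (a <= l < b)%N -> F l = 0) ->
  \sum_(0 <= l < b) F l = \sum_(0 <= l < a) F l.
Proof.
move=> hab h; rewrite (big_cat_nat _ (n := a)) //= [X in _ + X]big_nat_cond.
rewrite [X in _ + X]big1 ?addr0 // => l /andP [hl _]; exact: h.
Qed.

Lemma I2 (R : numFieldType) Q' (m : nat) q N p :
  lcoef (ressum R (Q' + m%:R) (q - m%:Z) N) p =
  \sum_(r <- iota 0 m.+1) ratr (binq m%:R r) * lcoef (ressum R Q' (q - r%:Z) N) p.
Proof.
rewrite lcoef_ressum.
under eq_bigr => r _ do rewrite lcoef_ressum.
have [h|h] := boolP ((q - m%:Z <= p) && (p <= N)); last first.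
  rewrite big1_seq // => r; rewrite mem_iota => /andP [_ hr].
  rewrite ifF ?mulr0 //; apply/negbTE; move: h hr; lia.
set n := absz (p - (q - m%:Z))%R.
pose G l := ('C(m, l))%:R * (if (l <= n)%N then ratr (binq Q' (n - l)) : R else 0).
have -> : iota 0 m.+1 = index_iota 0 m.+1 by rewrite /index_iota subn0.
rewrite big_nat_rev /=.
rewrite (eq_big_nat _ _ (F2 := G)); last first.
  move=> r /andP [_ hr]; rewrite add0n subSS binq_nat bin_sub // /G.
  have [hrn|hrn] := leqP r n.
    rewrite ifT; last by move: h hr hrn; rewrite /n; lia.
    rewrite ratr_nat; congr (_ * ratr (binq _ _)); move: h hr hrn; rewrite /n; lia.
  rewrite mulr0; case: ifP => [h'|]; last by rewrite mulr0.
  exfalso; move: h h' hr hrn; rewrite /n; lia.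
rewrite addrC vand rmorph_sum.
transitivity (\sum_(0 <= l < n.+1) G l); last first.
  rewrite -(@sum_trunc _ G _ (n.+1 + m.+1)) ?leq_addr //; last first.
    by move=> l /andP [hl _]; rewrite /G ifF ?mulr0 //; apply/negbTE; lia.
  rewrite -(@sum_trunc _ G m.+1 (n.+1 + m.+1)) ?leq_addl //.
  by move=> l /andP [hl _]; rewrite /G bin_small ?mul0r.
rewrite big_mkord; apply: eq_bigr => l _.
have hl : (l <= n)%N by have := ltn_ord l.
by rewrite /G hl rmorphM binq_nat rmorph_nat.
Qed.

Lemma neg_absz (j : int) : j <= 0 -> j = - (absz j)%:Z.
Proof. lia. Qed.

Lemma part3a (R : numFieldType) N g Q q (s : lpoly R) :
  inO R N Q q s -> inO R N (g - Q - q%:~R) q (phi R N g s).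
Proof.
move=> [a [b [ha [hb e]]]].
set Q' := g - Q - q%:~R.
exists a, (flatten [seq [seq (-(r%:Z), t.2 * (-1) ^ (q + t.1 + 1)%R * ratr (binq (absz t.1)%:R r))
                     | r <- iota 0 (absz t.1).+1] | t <- b]).
split; first done; split.
  apply/allP => t /flattenP [u /mapP [t0 _ ->] /mapP [r _ ->]] /=; lia.
move=> m0.
rewrite lcoef_phi (@Ef_ext _ _ _ _ e) Ef_cat Ef_flatten lcoef_cat lcoef_flatten.
congr (_ + _).
  rewrite -[RHS]Ef_delta /Ef big_seq [RHS]big_seq; apply: eq_bigr => t ht.
  have := allP ha t ht => /= ht1.
  by rewrite /phi_mono ifF ?lcoef_mono //; apply/negbTE; lia.
rewrite big_flatten big_map big_seq [RHS]big_seq; apply: eq_bigr => u hu.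
have hu1 := allP hb u hu; simpl in hu1.
rewrite Ef_lscale -lcoef_phi part1 big_map.
set mm := absz u.1.
have -> : g - Q - (q + u.1)%:~R = Q' + mm%:R.
  have -> : u.1 = - (mm%:Z) by exact: neg_absz.
  rewrite /Q' intrD mulrNz; change ((mm%:Z)%:~R : rat) with (mm%:R : rat); ring.
have -> : q + u.1 = q - mm%:Z by rewrite {1}(neg_absz _ hu1).
rewrite I2 !mulr_sumr; apply: eq_bigr => r _.
by rewrite lcoef_lscale /=; ring.
Qed.

Theorem mainTheorem6 (R : numClosedFieldType) (N : int) (g : rat) :
  (forall (k : rat) (i : int), i <= N ->
     lcoef (phi R N g (ressum R k i N))
       =1 lcoef (lscale ((-1) ^ (i + 1)) (ressum R (g - k - i%:~R) i N)))
  /\ (forall s : lpoly R, lcoef (phi R N g (phi R N g s)) =1 lcoef s)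
  /\ (forall (Q : rat) (q : int),
        (forall s : lpoly R, inO R N Q q s -> inO R N (g - Q - q%:~R) q (phi R N g s))
        /\ (forall t : lpoly R, inO R N (g - Q - q%:~R) q t ->
              exists s : lpoly R, inO R N Q q s /\ lcoef (phi R N g s) =1 lcoef t)).
Proof.
split; first by move=> k i _ m; rewrite part1 lcoef_lscale.
split; first exact: part2.
move=> Q q; split; first exact: part3a.
move=> t ht; exists (phi R N g t); split; last exact: part2.
have := @part3a R N g _ _ _ ht.
by have -> : g - (g - Q - q%:~R) - q%:~R = Q by ring.
Qed.
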